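(* Let $\mathcal G$ be a second countable Baire topological space, let $X$ be a finite-dimensional $C^1$ manifold (Hausdorff, second countable), and let $\mathcal H \subset \mathcal G \times X$ be a closed subset. Suppose that for each $(g_0,x_0)\in\mathcal H$ there exists an $n$-dimensional slice across $\mathcal H$ at $(g_0,x_0)$ for some $n > \dim X$. Then the set \[ \{g \in \mathcal G : (g,x) \in \mathcal H \text{ for some } x \in X \} \] is meager in $\mathcal G$. If moreover $X$ is compact, then this set is closed and nowhere dense.
   Context: Given $(g_0,x_0)\in\mathcal H$ and a positive integer $n$, an $n$-dimensional slice across $\mathcal H$ at $(g_0,x_0)$ is a map $\Phi:U\times V\to\mathbb R^n$, where $U$ is a neighborhood of $0$ in $\mathbb R^n$ and $V$ a neighborhood of $x_0$ in $X$, such that: (1) there is a continuous map $\rho:U\to\mathcal G$ with $\rho(0)=g_0$; (2) there is a continuous map $\pi:\rho(U)\times V\to\mathbb R^n$ with $\pi(\mathcal H)=\{0\}$ (i.e. $\pi$ vanishes on $\mathcal H\cap(\rho(U)\times V)$); (3) $\Phi(s,x)=\pi(\rho(s),x)$ is $C^1$ on $U\times V$; (4) $\det d_s\Phi(0,x_0)\neq 0$. *)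

(* Defs.v *)
From HB Require Import structures.
From mathcomp Require Import all_boot all_order all_algebra.
From mathcomp Require Import all_classical all_reals all_analysis.
Set Implicit Arguments. Unset Strict Implicit. Unset Printing Implicit Defensive.
Import Order.TTheory GRing.Theory Num.Theory.
Import numFieldNormedType.Exports.
Local Open Scope classical_set_scope.
Local Open Scope ring_scope.

Definition baire_space (T : topologicalType) : Prop :=
  forall F : (set T)^nat, (forall i, open (F i) /\ dense (F i)) ->
  dense (\bigcap_i F i).

Definition nowhere_dense (T : topologicalType) (S : set T) : Prop :=
  (closure S)° = set0.

Definition meager (T : topologicalType) (S : set T) : Prop :=
  exists F : (set T)^nat, (forall i, nowhere_dense (F i)) /\
    S `<=` \bigcup_i F i.

Definition C1_on (R : realType) (k l : nat) (A : set 'rV[R]_k)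
    (f : 'rV[R]_k -> 'rV[R]_l) : Prop :=
  forall x, A x -> differentiable f x /\
    forall v : 'rV[R]_k, {for x, continuous ('D_v f)}.

Record chart (R : realType) (X : topologicalType) (m : nat) := Chart {
  ch_dom : set X;
  ch_map : X -> 'rV[R]_m;
  ch_inv : 'rV[R]_m -> X }.

Definition is_chart (R : realType) (X : topologicalType) (m : nat)
    (c : chart R X m) : Prop :=
  [/\ open (ch_dom c) /\ open (ch_map c @` ch_dom c),
      {within ch_dom c, continuous (ch_map c)},
      {within ch_map c @` ch_dom c, continuous (ch_inv c)},
      (forall x, ch_dom c x -> ch_inv c (ch_map c x) = x) &
      (forall y, (ch_map c @` ch_dom c) y -> ch_map c (ch_inv c y) = y)].

Definition C1_atlas (R : realType) (X : topologicalType) (m : nat)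
    (Atl : set (chart R X m)) : Prop :=
  [/\ (forall c, Atl c -> is_chart c),
      (forall x : X, exists c, Atl c /\ ch_dom c x) &
      (forall c1 c2, Atl c1 -> Atl c2 ->
         C1_on (ch_map c1 @` (ch_dom c1 `&` ch_dom c2))
               (ch_map c2 \o ch_inv c1))].

(** A map [Phi : R^n x X -> R^k] is C^1 on [U x V] (U open in R^n, V open in
    X), the C^1 structure of X being given by the atlas [Atl]: in every chart,
    the local expression (s, y) |-> Phi (s, chart^-1 y) is C^1 (here R^n x R^m
    is identified with R^(n+m) via block row vectors). *)
Definition C1_map (R : realType) (X : topologicalType) (m n k : nat)
    (Atl : set (chart R X m)) (U : set 'rV[R]_n) (V : set X)
    (Phi : 'rV[R]_n -> X -> 'rV[R]_k) : Prop :=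
  forall c, Atl c ->
    C1_on [set z : 'rV[R]_(n + m) | U (lsubmx z) /\
                                    (ch_map c @` (ch_dom c `&` V)) (rsubmx z)]
          (fun z => Phi (lsubmx z) (ch_inv c (rsubmx z))).

Definition slice (R : realType) (G X : topologicalType) (m : nat)
    (Atl : set (chart R X m)) (H : set (G * X)) (g0 : G) (x0 : X) (n : nat)
    : Prop :=
  exists (U : set 'rV[R]_n) (V : set X) (rho : 'rV[R]_n -> G)
         (pi : G -> X -> 'rV[R]_n),
    [/\ (open U /\ U 0) /\ (open V /\ V x0),
        {within U, continuous rho} /\ rho 0 = g0,
        {within [set p : G * X | (rho @` U) p.1 /\ V p.2],
                    continuous (fun p : G * X => pi p.1 p.2)} /\
                  (forall g x, (rho @` U) g -> V x -> H (g, x) -> pi g x = 0),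
        C1_map Atl U V (fun s x => pi (rho s) x) &
        \det ('J (fun s => pi (rho s) x0) 0) != 0].

(* Main.v *)
Require Import Defs.
From HB Require Import structures.
From mathcomp Require Import all_boot all_order all_algebra.
From mathcomp Require Import all_classical all_reals all_analysis.
From mathcomp Require Import ring lra zify.
From Stdlib Require Import Lia.
Import Order.TTheory GRing.Theory Num.Theory.
Import numFieldNormedType.Exports.
Local Open Scope classical_set_scope.
Local Open Scope ring_scope.

Lemma nat_dist_ge1 {R : realType} (x y : nat) : x != y -> 1 <= `|x%:R - y%:R : R|.
Proof.
move=> xy; case: (ltngtP x y) xy => // h _.
- by rewrite distrC -(natrB R (ltnW h)) normr_nat ler1n subn_gt0.
- by rewrite -(natrB R (ltnW h)) normr_nat ler1n subn_gt0.
Qed.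

Lemma truncn_close {R : realType} (t t' : R) : 0 <= t -> 0 <= t' -> Num.truncn t = Num.truncn t' ->
  `|t - t'| < 1.
Proof.
move=> t0 t'0 e.
have /andP[a1 a2] := truncn_itv t0.
have /andP[b1 b2] := truncn_itv t'0.
rewrite e in a1 a2.
move: a1 a2 b1 b2; set k := (Num.truncn t')%:R; set k1 := (Num.truncn t').+1%:R.
have -> : k1 = k + 1 by rewrite /k1 /k -addn1 natrD.
move=> a1 a2 b1 b2.
rewrite ltr_norml; apply/andP; split; lra.
Qed.
Section Norms2.
Context {R : realType}.

Lemma rv_entry_le k (v : 'rV[R]_k) i : `|v ord0 i| <= `|v|.
Proof.
rewrite [leRHS]/Num.Def.normr /= mx_normrE.
exact: (le_bigmax _ (fun ij : 'I_1 * 'I_k => `|v ij.1 ij.2|) (ord0, i)).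
Qed.

Lemma rv_norm_le k (v : 'rV[R]_k) (r : R) : 0 <= r -> (forall i, `|v ord0 i| <= r) -> `|v| <= r.
Proof.
move=> r0 H; rewrite [leLHS]/Num.Def.normr /= mx_normrE.
apply: bigmax_le => // -[i j] _ /=.
by rewrite (ord1 i).
Qed.

Lemma rv_norm_lt k (v : 'rV[R]_k) (r : R) : 0 < r -> (forall i, `|v ord0 i| < r) -> `|v| < r.
Proof.
move=> r0 H; rewrite [ltLHS]/Num.Def.normr /= mx_normrE.
apply: bigmax_lt => // -[i j] _ /=.
by rewrite (ord1 i).
Qed.

Lemma row_mx_norm_le a b (u : 'rV[R]_a) (w : 'rV[R]_b) (r : R) :
  0 <= r -> `|u| <= r -> `|w| <= r -> `|row_mx u w| <= r.
Proof.
move=> r0 hu hw; apply: rv_norm_le => // i.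
rewrite -(fintype.splitK i); case: (fintype.split i) => j /=.
- by rewrite row_mxEl (le_trans (rv_entry_le _ _ _)).
- by rewrite row_mxEr (le_trans (rv_entry_le _ _ _)).
Qed.

Lemma lsub_norm_le a b (z : 'rV[R]_(a + b)) : `|lsubmx z| <= `|z|.
Proof.
apply: rv_norm_le => // i; rewrite mxE; exact: rv_entry_le.
Qed.

Lemma rsub_norm_le a b (z : 'rV[R]_(a + b)) : `|rsubmx z| <= `|z|.
Proof.
apply: rv_norm_le => // i; rewrite mxE; exact: rv_entry_le.
Qed.

Lemma mul_entry_le {a b} (v : 'rV[R]_a) (M : 'M[R]_(a, b)) j (e : R) :
  (forall i, `|M i j| <= e) -> `|(v *m M) ord0 j| <= a%:R * e * `|v|.
Proof.
move=> he; rewrite mxE (le_trans (ler_norm_sum _ _ _))//.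
apply: le_trans (_ : \sum_(i < a) (e * `|v|) <= _).
  apply: ler_sum => i _; rewrite normrM mulrC ler_pM //.
  exact: rv_entry_le.
by rewrite sumr_const card_ord -mulrA mulr_natl.
Qed.

Lemma mulmx_bound a b (M : 'M[R]_(a, b)) :
  exists2 K, 0 < K & forall v : 'rV[R]_a, `|v *m M| <= K * `|v|.
Proof.
pose e := \sum_(ij : 'I_a * 'I_b) `|M ij.1 ij.2|.
have e0 : 0 <= e by apply: sumr_ge0.
exists (a%:R * e + 1); first by rewrite ltr_pwDr // mulr_ge0.
move=> v; apply: rv_norm_le; first by rewrite mulr_ge0 // addr_ge0 // mulr_ge0.
move=> j; apply: le_trans (mul_entry_le v M j e _) _.
  move=> i; rewrite /e (bigD1 (i, j)) //= lerDl; exact: sumr_ge0.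
by rewrite ler_wpM2r ?lerDl.
Qed.
End Norms2.
Lemma grid_count (R : realType) n m (C delta eps : R) (y0 : 'rV[R]_m)
  (P : 'rV[R]_n -> 'rV[R]_m -> Prop) :
  (m < n)%N -> 0 < C -> 0 < delta -> 0 < eps ->
  (forall s y, P s y -> `|y - y0| <= delta) ->
  (forall s s' y y', P s y -> P s' y' -> `|s - s'| <= C * `|y - y'|) ->
  exists s : 'rV[R]_n, `|s| < eps /\ forall y, ~ P s y.
Proof.
move=> mn C0 d0 e0 Pb Pl.
have [//|nex] := pselect (exists s : 'rV[R]_n, `|s| < eps /\ forall y, ~ P s y).
exfalso.
have ex : forall s : 'rV[R]_n, exists y, `|s| < eps -> P s y.
  move=> s; have [hs|hs] := pselect (`|s| < eps); last by exists 0.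
  apply: contrapT => hn; apply: nex; exists s; split => // y Py; apply: hn; by exists y.
have [Y HY] := choice ex.
pose a := 4 * delta * C / eps.
pose b := (Num.truncn a).+1.
pose K := (b ^ m).+1.
have K0 : (0 < K)%N by [].
have K0r : 0 < K%:R :> R by rewrite ltr0n.
pose d := eps / (2 * K%:R).
pose h := d / C.
pose s (phi : {ffun 'I_n -> 'I_K}) : 'rV[R]_n := \row_i ((phi i)%:R * d).
have dp : 0 < d by rewrite divr_gt0 // mulr_gt0 // ltr0n.
have hp : 0 < h by rewrite divr_gt0.
have sl phi : `|s phi| < eps.
  apply: rv_norm_lt => // i; rewrite mxE normrM normr_nat (gtr0_norm dp).
  apply: (@le_lt_trans _ _ (K%:R * d)).
    by rewrite ler_wpM2r ?(ltW dp) // ler_nat ltnW.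
  have -> : K%:R * d = eps / 2 by rewrite /d; field; rewrite gt_eqF.
  lra.
have sd phi phi' : phi != phi' -> d <= `|s phi - s phi'|.
  move=> ne.
  have : ~ (forall i, phi i = phi' i) by move=> H; move/eqP: ne; apply; apply/ffunP.
  move=> /existsNP [i hi].
  apply: le_trans (rv_entry_le _ _ i).
  rewrite !mxE -mulrBl normrM (gtr0_norm dp) ler_peMl ?(ltW dp) //.
  apply: nat_dist_ge1; apply/eqP => /ord_inj; exact: hi.
have Yd phi phi' : phi != phi' -> h <= `|Y (s phi) - Y (s phi')|.
  move=> ne; have H := Pl _ _ _ _ (HY _ (sl phi)) (HY _ (sl phi')).
  rewrite /h ler_pdivrMr // mulrC; exact: le_trans (sd _ _ ne) H.
pose L := (Num.truncn (2 * delta / h)).+1.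
pose cellv phi j : R := (Y (s phi) ord0 j - y0 ord0 j + delta) / h.
have cellb phi j : `|Y (s phi) ord0 j - y0 ord0 j| <= delta.
  have := rv_entry_le _ (Y (s phi) - y0) j; rewrite !mxE => H.
  exact: le_trans H (Pb _ _ (HY _ (sl phi))).
have cell0 phi j : 0 <= cellv phi j.
  rewrite /cellv divr_ge0 ?(ltW hp) //.
  have := cellb phi j; rewrite ler_norml => /andP[H1 H2]; lra.
have cellL phi j : (Num.truncn (cellv phi j) < L)%N.
  rewrite ltnS; apply: le_truncn.
  rewrite /cellv ler_pM2r ?invr_gt0 //.
  have := cellb phi j; rewrite ler_norml => /andP[H1 H2]; lra.
pose f (phi : {ffun 'I_n -> 'I_K}) : {ffun 'I_m -> 'I_L} :=
  [ffun j => Ordinal (cellL phi j)].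
have finj : injective f.
  move=> phi phi' e; apply/eqP; apply: contraT => ne.
  suff H : `|Y (s phi) - Y (s phi')| < h by move: (Yd _ _ ne); rewrite leNgt H.
  apply: rv_norm_lt => // j.
  have ej : Num.truncn (cellv phi j) = Num.truncn (cellv phi' j).
    by have := congr1 (fun g : {ffun 'I_m -> 'I_L} => nat_of_ord (g j)) e; rewrite /f !ffunE.
  have := truncn_close _ _ (cell0 phi j) (cell0 phi' j) ej.
  have -> : cellv phi j - cellv phi' j = (Y (s phi) - Y (s phi')) ord0 j / h.
    by rewrite /cellv !mxE -mulrBl; congr (_ * _); lra.
  by rewrite normrM normfV (gtr0_norm hp) ltr_pdivrMr // mul1r.
have hc := leq_card _ finj; rewrite !card_ffun !card_ord in hc.
have Lb : (L <= b * K)%N.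
  rewrite /L truncn_lt_nat; last by rewrite mulr_ge0 ?invr_ge0 ?(ltW hp) // mulr_ge0 // ltW.
  have -> : 2 * delta / h = a * K%:R.
    rewrite /h /d /a; field; rewrite ?gt_eqF //.
  rewrite natrM ltr_pM2r //; exact: truncnS_gt.
have h1 : (K ^ m.+1 <= K ^ n)%N := leq_pexp2l K0 mn.
have h2 : (L ^ m <= (b * K) ^ m)%N.
  by case: (posnP m) => [->//|m0]; rewrite leq_exp2r.
rewrite expnMn expnS in h2 h1.
have X0 : (0 < K ^ m)%N by rewrite expn_gt0.
have H := leq_trans h1 (leq_trans hc h2).
move: H X0; move: (K ^ m)%N => X; rewrite /K; move: (b ^ m)%N => Z H X0.
nia.
Qed.
Section MVT.
Context {R : realType}.

Lemma shift_line k n (f : 'rV[R]_k -> 'rV[R]_n) (p w : 'rV[R]_k) (t : R) :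
  (fun h : R => h^-1 *: (((fun t : R => f (p + t *: w)) \o shift t) (h *: 1) - f (p + t *: w)))
  = (fun h : R => h^-1 *: ((f \o shift (p + t *: w)) (h *: w) - f (p + t *: w))).
Proof.
apply/funext => h /=; congr (_ *: (f _ - _)).
by rewrite /shift /= scaler1 scalerDl addrC -addrA (addrC (t *: w)).
Qed.

Lemma line_derive k n (f : 'rV[R]_k -> 'rV[R]_n) (p w : 'rV[R]_k) (t : R) j :
  differentiable f (p + t *: w) ->
  is_derive t 1 (fun t : R => f (p + t *: w) ord0 j) (('D_w f (p + t *: w)) ord0 j).
Proof.
move=> df.
have dg : derivable (fun t : R => f (p + t *: w)) t 1.
  rewrite /derivable shift_line; exact: diff_derivable.
have Dg : 'D_1 (fun t : R => f (p + t *: w)) t = 'D_w f (p + t *: w).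
  by rewrite /derive shift_line.
split.
  by move/derivable_mxP : dg => /(_ ord0 j).
by rewrite -Dg (derive_mx dg) mxE.
Qed.

Lemma mvt_comp k n (f : 'rV[R]_k -> 'rV[R]_n) (p w : 'rV[R]_k) j :
  (forall t, 0 <= t <= 1 -> differentiable f (p + t *: w)) ->
  exists2 t, 0 <= t <= 1 & (f (p + w) - f p) ord0 j = ('D_w f (p + t *: w)) ord0 j.
Proof.
move=> df.
have [||c c01 e] := @MVT_segment R (fun t : R => f (p + t *: w) ord0 j)
   (fun t : R => ('D_w f (p + t *: w)) ord0 j) 0 1 ler01.
- move=> x; rewrite in_itv /= => /andP[x0 x1]; apply: line_derive.
  by apply: df; rewrite !ltW.
- apply: continuous_in_subspaceT => x; rewrite inE /= in_itv /= => x01.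
  have := @line_derive _ _ f p w x j (df _ x01) => -[d _].
  by apply: differentiable_continuous; apply/derivable1_diffP.
- exists c; first by move: c01; rewrite in_itv.
  by move: e; rewrite scale1r scale0r addr0 subr0 mulr1 !mxE.
Qed.
End MVT.
Section Approx.
Context {R : realType}.

Lemma jac_entry k n (f : 'rV[R]_k -> 'rV[R]_n) z i j :
  differentiable f z -> 'J f z i j = ('D_('e_i) f z) ord0 j.
Proof. by move=> df; rewrite (deriveEjacobian _ df) -rowE [RHS]mxE. Qed.

Lemma seg_ball k (p q p0 : 'rV[R]_k) (r t : R) : 0 <= t <= 1 ->
  `|p - p0| < r -> `|q - p0| < r -> `|p + t *: (q - p) - p0| < r.
Proof.
move=> /andP[t0 t1] hp hq.
have -> : p + t *: (q - p) - p0 = (1 - t) *: (p - p0) + t *: (q - p0).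
  by apply/rowP => i; rewrite !mxE; ring.
apply: le_lt_trans (ler_normD _ _) _.
rewrite !normrZ !ger0_norm ?subr_ge0 //.
set a := `|p - p0|; set b := `|q - p0|.
have hm : Num.max a b < r by rewrite gt_max hp hq.
have h1 : (1 - t) * a <= (1 - t) * Num.max a b by rewrite ler_wpM2l ?subr_ge0 // le_max lexx.
have h2 : t * b <= t * Num.max a b by rewrite ler_wpM2l // le_max lexx orbT.
lra.
Qed.

Lemma approx k n (f : 'rV[R]_k -> 'rV[R]_n) (p0 : 'rV[R]_k) (r0 : R) :
  0 < r0 -> (forall z, `|z - p0| < r0 -> differentiable f z) ->
  (forall v, {for p0, continuous ('D_v f)}) ->
  forall e, 0 < e -> exists2 r, 0 < r & forall p q, `|p - p0| < r -> `|q - p0| < r ->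
     `|f q - f p - (q - p) *m 'J f p0| <= e * `|q - p|.
Proof.
move=> r00 df dc e e0.
have JE : forall z v, differentiable f z -> 'D_v f z = v *m 'J f z.
  by move=> z v dz; apply: deriveEjacobian.
move: (jacobian f) JE => Jf JE.
have Jent z i j : differentiable f z -> Jf z i j = ('D_('e_i) f z) ord0 j.
  by move=> dz; rewrite (JE _ _ dz) -rowE [RHS]mxE.
pose e' := e / (k%:R + 1).
have e'0 : 0 < e' by rewrite divr_gt0 // ltr_wpDl.
have near1 : \forall z \near p0, forall i : 'I_k, `|'D_('e_i) f z - 'D_('e_i) f p0| < e'.
  apply: (@filter_forall _ _ _ _ (nbhs_filter p0)) => i.
  have := dc ('e_i) (ball ('D_('e_i) f p0) e') (nbhsx_ballx _ _ e'0).
  move=> H; apply: (@filterS _ _ (nbhs_filter p0) _ _ _ H) => z /=.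
  by rewrite -ball_normE /= distrC.
have /nbhs_ballP [r1 /= r10 H1] := near1.
exists (Num.min r0 r1); first by rewrite lt_min r00 r10.
move=> p q hp hq.
have hz t : 0 <= t <= 1 -> `|p + t *: (q - p) - p0| < r0 /\ `|p + t *: (q - p) - p0| < r1.
  by move=> t01; have := @seg_ball _ p q p0 _ t t01 hp hq; rewrite lt_min => /andP[].
apply: rv_norm_le; first by rewrite mulr_ge0 // ltW.
move=> j.
have [t t01 et] := @mvt_comp _ _ _ f p (q - p) j
  (fun t t01 => df _ (hz t t01).1).
have pq : p + (q - p) = q by rewrite addrC subrK.
rewrite pq in et; move: et; have dz := df _ (hz t t01).1.
have dp0 : differentiable f p0 by apply: df; rewrite subrr normr0.
rewrite (JE _ _ dz) => et.
have Hb : forall i, `|Jf (p + t *: (q - p)) i j - Jf p0 i j| <= e'.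
  move=> i; rewrite (Jent _ i j dz) (Jent _ i j dp0).
  have hb : ball p0 r1 (p + t *: (q - p)).
    by rewrite -ball_normE /= distrC; exact: (hz t t01).2.
  have := H1 _ hb i.
  move=> /ltW; apply: le_trans.
  have := rv_entry_le _ ('D_('e_i) f (p + t *: (q - p)) - 'D_('e_i) f p0) j.
  by rewrite mxE [X in `|_ + X|]mxE.
move: et Hb; move: (Jf (p + t *: (q - p))) (Jf p0) => J1 J0 et Hb.
have -> : (f q - f p - (q - p) *m J0) ord0 j = ((q - p) *m (J1 - J0)) ord0 j.
  rewrite mulmxBr; move: et.
  move: ((q - p) *m J1) ((q - p) *m J0) => u v.
  by rewrite !mxE => ->.
apply: le_trans (mul_entry_le _ _ j e' _) _.
  by move=> i; rewrite !mxE.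
rewrite ler_wpM2r // /e' mulrC -mulrA ger_pMr // ?ler_pdivrMr ?mul1r ?lerDl //.
by rewrite mulrC ler_pdivrMr ?mul1r ?lerDl // ltr_wpDl.
Qed.
End Approx.
Section Core.
Context {R : realType}.

Lemma mulmxr_continuous a b (M : 'M[R]_(a, b)) : continuous (@mulmxr R 1 a b M).
Proof.
apply: bounded_linear_continuous; apply/linear_boundedP.
have [K K0 HK] := mulmx_bound _ _ M.
near=> r => x; apply: le_trans (HK x) _; rewrite ler_wpM2r //.
Unshelve. all: by end_near. Qed.

Lemma row_mx_diff n m (y0 : 'rV[R]_m) (x : 'rV[R]_n) :
  differentiable (fun s : 'rV[R]_n => row_mx s y0) x.
Proof.
have -> : (fun s : 'rV[R]_n => row_mx s y0) =
    (mulmxr (row_mx 1%:M 0 : 'M[R]_(n, n + m))) + cst (row_mx 0 y0).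
  apply/funext => s /=.
  rewrite -[X in _ = X]/(mulmxr (row_mx 1%:M 0) s + row_mx 0 y0) /mulmxr.
  by rewrite mul_mx_row mulmx1 mulmx0 add_row_mx addr0 add0r.
apply: differentiableD; last exact: differentiable_cst.
exact/linear_differentiable/mulmxr_continuous.
Qed.

Lemma jac_block n m (F : 'rV[R]_(n + m) -> 'rV[R]_n) (y0 : 'rV[R]_m)
  (g : 'rV[R]_n -> 'rV[R]_n) : (forall s, g s = F (row_mx s y0)) ->
  differentiable F (row_mx 0 y0) ->
  'J g 0 = usubmx ('J F (row_mx 0 y0)).
Proof.
move=> hg dF.
have eg : g = F \o (fun s : 'rV[R]_n => row_mx s y0) by apply/funext => s; rewrite hg.
have dg : differentiable g 0.
  by rewrite eg; apply: differentiable_comp; [exact: row_mx_diff|].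
have E (v : 'rV[R]_n) : 'D_v g 0 = 'D_(row_mx v 0) F (row_mx 0 y0).
  have Ef : (fun h : R => h^-1 *: ((g \o shift 0) (h *: v) - g 0))
    = (fun h : R => h^-1 *: ((F \o shift (row_mx 0 y0)) (h *: row_mx v 0) - F (row_mx 0 y0))).
    apply/funext => h /=; rewrite !hg; congr (_ *: (F _ - _)).
    by rewrite /shift /= addr0 scale_row_mx scaler0 add_row_mx add0r addr0.
  by rewrite /derive Ef.
have E2 (v : 'rV[R]_n) : v *m 'J g 0 = row_mx v 0 *m 'J F (row_mx 0 y0).
  by rewrite -(deriveEjacobian _ dg) -(deriveEjacobian _ dF) E.
apply/row_matrixP => i; rewrite !rowE E2.
move: ('J F (row_mx 0 y0)) => J.
by rewrite -{1}(vsubmxK J) mul_row_col mul0mx addr0.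
Qed.
End Core.
Section Core2.
Context {R : realType}.

Lemma core n m (F : 'rV[R]_(n + m) -> 'rV[R]_n) (y0 : 'rV[R]_m) (r0 : R) :
  (m < n)%N -> 0 < r0 ->
  (forall z, `|z - row_mx 0 y0| < r0 -> differentiable F z) ->
  (forall v, {for row_mx 0 y0, continuous ('D_v F)}) ->
  \det ('J (fun s => F (row_mx s y0)) 0) != 0 ->
  exists2 delta, 0 < delta & forall eps, 0 < eps -> exists s,
    `|s| < eps /\ forall y, `|y - y0| < delta -> F (row_mx s y) != 0.
Proof.
move=> mn r00 dF cF hdet.
have dF0 : differentiable F (row_mx 0 y0) by apply: dF; rewrite subrr normr0.
rewrite (@jac_block _ _ _ F y0 (fun s => F (row_mx s y0)) (fun=> erefl) dF0) in hdet.
have happ := @approx R _ _ F (row_mx 0 y0) r0 r00 dF cF.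
move: ('J F (row_mx 0 y0)) happ hdet => J0 happ hdet.
set A := usubmx J0 in hdet; set B := dsubmx J0.
have Au : A \in unitmx by rewrite unitmxE unitfE.
have [KI KI0 HKI] := mulmx_bound _ _ (invmx A).
have [KB KB0 HKB] := mulmx_bound _ _ B.
have [r1 r10 Hr1] := happ (1 / (2 * KI)) (divr_gt0 ltr01 (mulr_gt0 (ltr0n _ 2) KI0)).
pose r := r1 / 2.
have rp : 0 < r by rewrite divr_gt0.
have rr1 : r < r1 by rewrite /r ltr_pdivrMr // ltr_pMr // ltr1n.
pose P s y := `|s| < r /\ `|y - y0| < r /\ F (row_mx s y) = 0.
have Pin s y : P s y -> `|row_mx s y - row_mx 0 y0| < r1.
  move=> [hs [hy _]]; apply: le_lt_trans rr1.
  rewrite opp_row_mx add_row_mx oppr0 addr0.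
  by apply: row_mx_norm_le; rewrite ?ltW.
pose C := 1 + 2 * KI * KB.
have C0 : 0 < C by rewrite /C ltr_pwDl // !mulr_ge0 // ltW.
have Plip s s' y y' : P s y -> P s' y' -> `|s - s'| <= C * `|y - y'|.
  move=> Ps Ps'.
  have H := Hr1 _ _ (Pin _ _ Ps') (Pin _ _ Ps).
  move: Ps Ps' H => [_ [_ ->]] [_ [_ ->]].
  rewrite subrr sub0r normrN opp_row_mx add_row_mx -{1}(vsubmxK J0) mul_row_col -/A -/B.
  set ds := s - s'; set dy := y - y'.
  have nrm : `|row_mx ds dy| <= `|ds| + `|dy|.
    by apply: row_mx_norm_le; rewrite ?addr_ge0 ?lerDl ?lerDr.
  have h1 : `|ds| <= KI * `|ds *m A|.
    by have := HKI (ds *m A); rewrite mulmxK.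
  have h2 : `|ds *m A| <= `|ds *m A + dy *m B| + KB * `|dy|.
    rewrite {1}(_ : ds *m A = (ds *m A + dy *m B) - dy *m B); last by rewrite addrK.
    by apply: le_trans (ler_normB _ _) _; rewrite lerD2l.
  move=> h3.
  have h4 : `|ds *m A + dy *m B| <= 1 / (2 * KI) * (`|ds| + `|dy|).
    by apply: le_trans h3 _; rewrite ler_wpM2l // divr_ge0 // mulr_ge0 // ltW.
  have h5 : KI * `|ds *m A| <= KI * (1 / (2 * KI) * (`|ds| + `|dy|)) + KI * (KB * `|dy|).
    by rewrite -mulrDr ler_wpM2l ?(ltW KI0) // (le_trans h2) // lerD2r.
  have e1 : KI * (1 / (2 * KI) * (`|ds| + `|dy|)) = (`|ds| + `|dy|) / 2.
    by field; rewrite gt_eqF.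
  rewrite e1 in h5.
  have e2 : C * `|dy| = `|dy| + 2 * (KI * (KB * `|dy|)) by rewrite /C; ring.
  rewrite e2; lra.
exists r => // eps eps0.
have em : 0 < Num.min eps r by rewrite lt_min eps0 rp.
have [s [hs hns]] := @grid_count R n m C r (Num.min eps r) y0 P mn C0 rp em
  (fun s y Ps => ltW Ps.2.1) Plip.
exists s; split; first by move: hs; rewrite lt_min => /andP[].
move=> y hy; apply/eqP => Fz; apply: (hns y); split; last by split.
by move: hs; rewrite lt_min => /andP[].
Qed.
End Core2.
Lemma tube (G X : topologicalType) (H : set (G * X)) (K : set X) :
  closed H -> compact K -> closed [set g | exists x, K x /\ H (g, x)].
Proof.
move=> cH cK g cg.
pose S (A : set G) := [set x | K x /\ exists a, A a /\ H (a, x)].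
pose F := filter_from (nbhs g) S.
have FF : ProperFilter F.
  apply: filter_from_proper.
    apply: filter_from_filter; first by exists setT; exact: filterT.
    move=> A B hA hB; exists (A `&` B); first exact: filterI.
    by move=> x [Kx [a [[Aa Ba] Ha]]]; split; split=> //; exists a.
  move=> A hA; have [a [[x [Kx Hax]] Aa]] := cg A hA.
  by exists x; split => //; exists a.
have FK : F K by exists setT; [exact: filterT | move=> x []].
have [x [Kx clx]] := cK F FF FK.
exists x; split => //; apply: cH => N hN.
case: hN => -[A B] /= [hA hB] hAB.
have [x' [[Kx' [a [Aa Hax']]] Bx']] := clx (S A) B (ex_intro2 _ _ A hA (fun _ h => h)) hB.
by exists (a, x'); split => //; apply: hAB.
Qed.
Section Charts.
Context {R : realType} {X : topologicalType} {m : nat}.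

Lemma chart_inv_cont {c : chart R X m} : is_chart c ->
  forall y, (ch_map c @` ch_dom c) y -> {for y, continuous (ch_inv c)}.
Proof.
case=> [[od oi] _ ci _ _] y hy.
rewrite continuous_open_subspace // in ci.
by apply: ci; rewrite inE.
Qed.

Lemma chart_map_cont {c : chart R X m} : is_chart c ->
  forall x, ch_dom c x -> {for x, continuous (ch_map c)}.
Proof.
case=> [[od oi] cm _ _ _] x hx.
rewrite continuous_open_subspace // in cm.
by apply: cm; rewrite inE.
Qed.

Lemma chart_img_nbhs {c : chart R X m} : is_chart c -> forall x, ch_dom c x ->
  forall S, nbhs x S ->
  nbhs (ch_map c x) [set y | (ch_map c @` ch_dom c) y /\ S (ch_inv c y)].
Proof.
move=> hc x hx S hS.
have [[od oi] _ _ li ri] := hc.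
apply: filterI.
  by apply: open_nbhs_nbhs; split => //; exists x.
have := chart_inv_cont hc (ch_map c x) (ex_intro2 _ _ x hx erefl).
rewrite /prop_for /continuous_at li //.
by move=> /(_ S hS).
Qed.

Lemma chart_loc_compact (Atl : set (chart R X m)) : C1_atlas Atl ->
  hausdorff_space X -> forall (x : X) (W : set X), nbhs x W ->
  exists K, [/\ compact K, nbhs x K & K `<=` W].
Proof.
move=> [ach cov _] hX x W hW.
have [c [Ac hx]] := cov x.
have hc := ach c Ac.
have [[od oi] cm ci li ri] := hc.
have hS := chart_img_nbhs hc x hx _ (@filterI _ _ (nbhs_filter x) _ _ hW (open_nbhs_nbhs (conj od hx))).
have /nbhs_ballP [rho /= rho0 Hrho] := hS.
pose y0 := ch_map c x.
pose CB := closed_ball y0 (rho / 2).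
have CBsub : CB `<=` ball y0 rho by apply: subset_closure_half.
have CBS : CB `<=` [set y | (ch_map c @` ch_dom c) y /\ (W `&` ch_dom c) (ch_inv c y)].
  by move=> y /CBsub /Hrho.
exists (ch_inv c @` CB); split.
- apply: continuous_compact.
    apply: continuous_in_subspaceT => y; rewrite inE => /CBS [hy _].
    exact: chart_inv_cont hc y hy.
  have bCB : bounded_set CB.
    rewrite /CB closed_ballE ?divr_gt0 //.
    rewrite /= /bounded_near; near=> M => y /= hy.
    rewrite -[y](subrK y0) (le_trans (ler_normD _ _)) // -lerBrDr.
    apply: le_trans (_ : rho / 2 <= _); first by rewrite distrC.
    rewrite lerBrDr; near: M; apply: nbhs_pinfty_ge; exact: num_real.
  have cCB : closed CB by exact: closed_ball_closed.
  exact: (@bounded_closed_compact R m CB bCB cCB).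
- have hm := chart_map_cont hc x hx.
  have hb : nbhs x (ch_map c @^-1` ball y0 (rho / 2)).
    by apply: hm; apply: nbhsx_ballx; rewrite divr_gt0.
  apply: filterS (@filterI _ _ (nbhs_filter x) _ _ hb (open_nbhs_nbhs (conj od hx))).
  move=> x' [hb' hd']; exists (ch_map c x'); last exact: li.
  exact: subset_closed_ball.
- by move=> _ [y /CBS [_ [Wy _]] <-].
Unshelve. all: by end_near. Qed.
End Charts.
Lemma local_good {R : realType} {G X : topologicalType} {m : nat}
  (Atl : set (chart R X m)) (H : set (G * X)) :
  C1_atlas Atl -> forall g x n, (m < n)%N -> slice Atl H g x n ->
  exists W : set X, nbhs x W /\ forall O : set G, open O -> O g ->
     exists g', O g' /\ forall x', W x' -> ~ H (g', x').
Proof.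
move=> [ach cov atr] g x n mn [U [V [rho [pi [[[oU U0] [oV Vx]] [crho rho0] [_ pi0] C1 hdet]]]]].
have [c [Ac hx]] := cov x.
have hc := ach c Ac.
have [[od oi] cm ci li ri] := hc.
pose y0 := ch_map c x.
pose F (z : 'rV[R]_(n + m)) := pi (rho (lsubmx z)) (ch_inv c (rsubmx z)).
have C1F := C1 c Ac.
have hY : nbhs y0 (ch_map c @` (ch_dom c `&` V)).
  have := chart_img_nbhs hc x hx _ (open_nbhs_nbhs (conj (openI od oV) (conj hx Vx))).
  apply: filterS => y [hy hS]; exists (ch_inv c y) => //; exact: ri.
have hU : nbhs (0 : 'rV[R]_n) U := open_nbhs_nbhs (conj oU U0).
have /nbhs_ballP [ru /= ru0 Hu] := hU.
have /nbhs_ballP [ry /= ry0 Hy] := hY.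
pose r0 := Num.min ru ry.
have r00 : 0 < r0 by rewrite lt_min ru0 ry0.
have hD : forall z, `|z - row_mx 0 y0| < r0 ->
    U (lsubmx z) /\ (ch_map c @` (ch_dom c `&` V)) (rsubmx z).
  move=> z hz.
  have ez : z - row_mx 0 y0 = row_mx (lsubmx z) (rsubmx z - y0).
    by rewrite -{1}(hsubmxK z) opp_row_mx add_row_mx oppr0 addr0.
  rewrite ez lt_min in hz; case/andP: hz => hz1 hz2.
  split.
    apply: Hu; rewrite -ball_normE /= sub0r normrN.
    apply: le_lt_trans hz1.
    by have := lsub_norm_le _ _ (row_mx (lsubmx z) (rsubmx z - y0)); rewrite row_mxKl.
  apply: Hy; rewrite -ball_normE /= distrC.
  apply: le_lt_trans hz2.
  by have := rsub_norm_le _ _ (row_mx (lsubmx z) (rsubmx z - y0)); rewrite row_mxKr.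
have dF : forall z, `|z - row_mx 0 y0| < r0 -> differentiable F z.
  by move=> z hz; exact: (C1F z (hD z hz)).1.
have p0r : `|row_mx (0 : 'rV[R]_n) y0 - row_mx 0 y0| < r0 by rewrite subrr normr0.
have cF : forall v, {for row_mx 0 y0, continuous ('D_v F)}.
  exact: (C1F _ (hD _ p0r)).2.
have eF : (fun s : 'rV[R]_n => F (row_mx s y0)) = (fun s => pi (rho s) x).
  by apply/funext => s; rewrite /F row_mxKl row_mxKr li.
have hdet' : \det ('J (fun s : 'rV[R]_n => F (row_mx s y0)) 0) != 0 by rewrite eF.
have [delta d0 Hcore] := @core R n m F y0 r0 mn r00 dF cF hdet'.
exists [set x' | ch_dom c x' /\ V x' /\ `|ch_map c x' - y0| < delta]; split.
  have hb : nbhs x (ch_map c @^-1` ball y0 delta).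
    exact: (chart_map_cont hc x hx) _ (nbhsx_ballx _ _ d0).
  apply: filterS (@filterI _ _ (nbhs_filter x) _ _ hb
    (open_nbhs_nbhs (conj (openI od oV) (conj hx Vx)))).
  move=> x' [hb' [hd hv]]; split => //; split => //.
  by move: hb'; rewrite /= -ball_normE /= distrC.
move=> O oO Og.
have hr : {for 0, continuous rho}.
  by rewrite continuous_open_subspace // in crho; apply: crho; rewrite inE.
have hO : nbhs (0 : 'rV[R]_n) (rho @^-1` O).
  by apply: hr; rewrite rho0; exact: open_nbhs_nbhs.
have /nbhs_ballP [eps /= eps0 He] := @filterI _ _ (nbhs_filter (0 : 'rV[R]_n)) _ _ hO hU.
have [s [hs hns]] := Hcore eps eps0.
have [Os Us] : O (rho s) /\ U s.
  by apply: He; rewrite -ball_normE /= sub0r normrN.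
exists (rho s); split => // x' [hd [hv hxd]] hH.
have hpi := pi0 (rho s) x' (ex_intro2 _ _ s Us erefl) hv hH.
by have := hns (ch_map c x') hxd; rewrite /F row_mxKl row_mxKr li // hpi eqxx.
Qed.
Theorem theorem4p2 (R : realType) (G X : topologicalType) (m : nat)
    (Atl : set (chart R X m)) (H : set (G * X)) :
  second_countable (T := G) -> baire_space G ->
  hausdorff_space X -> second_countable (T := X) -> C1_atlas Atl ->
  closed H ->
  (forall (g0 : G) (x0 : X), H (g0, x0) ->
     exists n : nat, (m < n)%N /\ slice Atl H g0 x0 n) ->
  meager [set g : G | exists x : X, H (g, x)] /\
  (compact [set: X] ->
     closed [set g : G | exists x : X, H (g, x)] /\
     nowhere_dense [set g : G | exists x : X, H (g, x)]).
Proof.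
move=> _ hbaire hX [B cB bB] hatl cH hsl.
have /countable_injP [f finj] := cB.
pose e (k : nat) := [set x : X | exists2 b, (B b /\ f b = k) & b x].
have eB : forall b, B b -> e (f b) = b.
  move=> b Bb; apply/seteqP; split => x.
  - move=> [b' [Bb' fb'] b'x].
    by have <- := finj b' b (mem_set Bb') (mem_set Bb) fb'.
  - by move=> bx; exists b.
pose Kc k := closure (e k).
pose good (g : G) (x : X) (W : set X) := forall O : set G, open O -> O g ->
   exists g', O g' /\ forall x', W x' -> ~ H (g', x').
pose E k := [set g | compact (Kc k) /\ exists x, Kc k x /\ H (g, x) /\
   exists W, good g x W /\ Kc k `<=` W].
have nd k : nowhere_dense (E k).
  rewrite /nowhere_dense; apply/seteqP; split => // q hq.
  have nQ : nbhs q (closure (E k))° by apply: open_nbhs_nbhs; split => //; exact: open_interior.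
  have [g [Eg Qg]] := interior_subset hq _ nQ.
  case: Eg => cK [x [Kx [Hgx [W [gW KW]]]]].
  have [g' [Qg' nW]] := gW _ (@open_interior _ _) Qg.
  have cl := @tube G X H _ cH cK.
  have : [set g | exists x, Kc k x /\ H (g, x)] g'.
    have sub : E k `<=` [set g | exists x, Kc k x /\ H (g, x)].
      by move=> g0 [_ [x0 [Kx0 [H0 _]]]]; exists x0.
    by apply: cl; apply: (closure_subset sub); exact: interior_subset Qg'.
  by move=> [x' [Kx' Hx']]; exact: nW x' (KW _ Kx') Hx'.
have cover : [set g | exists x, H (g, x)] `<=` \bigcup_k E k.
  move=> g [x Hgx].
  have [n [mn sl]] := hsl g x Hgx.
  have [W [nW gW]] := @local_good R G X m Atl H hatl g x n mn sl.
  have [K [cK nK KW]] := @chart_loc_compact R X m Atl hatl hX x W nW.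
  have [b [Bb bx] bK] := bB.2 x K nK.
  exists (f b) => //.
  have Kcb : Kc (f b) = closure b by rewrite /Kc eB.
  have cKb : closed K := compact_closed hX cK.
  have clbK : closure b `<=` K.
    by rewrite [X in _ `<=` X](proj1 (closure_id K) cKb); exact: closure_subset.
  rewrite /E Kcb; split; first exact: subclosed_compact (@closed_closure _ b) cK clbK.
  exists x; split; first exact: subset_closure.
  split => //; exists W; split => //.
  by move=> y /clbK /KW.
split; first by exists E; split.
move=> cX.
have cP : closed [set g : G | exists x : X, H (g, x)].
  have cl := @tube G X H _ cH cX.
  move=> g gP.
  have [x [_ h]] : [set g | exists x, setT x /\ H (g, x)] g.
    have sub : [set g : G | exists x : X, H (g, x)] `<=` [set g | exists x, setT x /\ H (g, x)].
      by move=> g' [x h]; exists x.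
    by apply: cl; exact: (closure_subset sub).
  by exists x.
split => //.
rewrite /nowhere_dense -(proj1 (closure_id _) cP).
apply/seteqP; split => // q hq.
pose D k := ~` closure (E k).
have hD k : open (D k) /\ dense (D k).
  split; first exact: closed_openC (@closed_closure _ _).
  move=> O1 [z0 Oz0] oO1.
  have [//|hn] := pselect (O1 `&` D k !=set0).
  exfalso.
  have sub : O1 `<=` closure (E k).
    move=> y Oy; have [//|ny] := pselect (closure (E k) y).
    by exfalso; apply: hn; exists y; split.
  have : (closure (E k))° z0.
    by apply: filterS sub _; apply: open_nbhs_nbhs.
  by rewrite (nd k).
have dn := hbaire D hD.
have [g [Pg Dg]] := dn _ (ex_intro _ q hq) (@open_interior _ _).
have [k _ Ekg] := cover g (interior_subset Pg).
exact: (Dg k I) (subset_closure Ekg).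
Qed.
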